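(* For $n\ge1$, $q\in\mathbb{C}$ and indeterminates $z_1,\dots,z_n$, $$\sum_{\sigma\in\mathbb{S}_n}\mathrm{sgn}(\sigma)\prod_{1\le i<j\le n}\big(z_{\sigma(j)}-qz_{\sigma(i)}-(1-q)z_{\sigma(i)}z_{\sigma(j)}\big)=[n]_q!\prod_{1\le i<j\le n}(z_j-z_i).$$
   Context: $[k]_q=1+q+\cdots+q^{k-1}$ and $[n]_q!=[1]_q[2]_q\cdots[n]_q$. *)

(* Defs.v *)
From HB Require Import structures.
From mathcomp Require Import all_boot all_order all_algebra all_fingroup.
Set Implicit Arguments. Unset Strict Implicit. Unset Printing Implicit Defensive.
Import GRing.Theory.
Local Open Scope ring_scope.

Definition qint (R : comNzRingType) (q : R) (k : nat) : R := \sum_(i < k) q ^+ i.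

Definition qfact (R : comNzRingType) (q : R) (n : nat) : R :=
  \prod_(i < n) qint q i.+1.

(* Main.v *)
Require Import Defs.
From HB Require Import structures.
From mathcomp Require Import all_boot all_order all_algebra all_fingroup.
From mathcomp Require Import ring zify.
Import GRing.Theory.
Local Open Scope ring_scope.
Set Implicit Arguments. Unset Strict Implicit.

Section S.
Variable R : comNzRingType.

Definition asym n (F : 'I_n -> 'I_n -> R) : R :=
  \sum_(s : 'S_n) (-1) ^+ s * \prod_(i < n) \prod_(j < n | (i < j)%N) F (s i) (s j).

Definition Fh n (x y : 'I_n -> R) (q : R) (a b : 'I_n) := x b * y a - q * x a * y b.

Definition M0 n (x y : 'I_n -> R) : 'M[R]_n := \matrix_(k, v) (x v ^+ k * y v ^+ (n.-1 - k)).

Definition pc (q : R) n (p : 'I_n * 'I_n) (b : bool) : R :=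
  if (p.1 < p.2)%N then (if b then 1 else - q) else b%:R.

Definition exb n (b : bool) (k : 'I_n) (p : 'I_n * 'I_n) : nat :=
  (p.1 < p.2)%N && ((k == p.1) && ~~ b || (k == p.2) && b).
Definition eyb n (b : bool) (k : 'I_n) (p : 'I_n * 'I_n) : nat :=
  (p.1 < p.2)%N && ((k == p.1) && b || (k == p.2) && ~~ b).

Definition wc n (f : {ffun 'I_n * 'I_n -> bool}) k := (\sum_p exb (f p) k p)%N.

Definition Pm n (f : {ffun 'I_n * 'I_n -> bool}) : 'M[R]_n :=
  \matrix_(k, e) ((e : nat) == wc f k)%:R.

Definition Cq n (q : R) := \sum_(f : {ffun 'I_n * 'I_n -> bool})
   (\prod_p pc q p (f p)) * \det (Pm f).

Lemma count_pairs n (k : 'I_n) :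
  (\sum_(p : 'I_n * 'I_n) ((p.1 < p.2)%N && ((k == p.1) || (k == p.2)) : nat))%N = n.-1.
Proof.
rewrite -(pair_bigA _ (fun i j : 'I_n => ((i < j)%N && ((k == i) || (k == j)) : nat))) /=.
transitivity (\sum_(i < n) \sum_(j < n) (((i < j)%N && (k == i)) + ((i < j)%N && (k == j))))%N.
  apply: eq_bigr => i _; apply: eq_bigr => j _.
  case: ltngtP => //= hij; case: (k =P i) => [->|] /=; last by case: (k == j).
  by move: hij; case: (i =P j) => [->|]; rewrite ?ltnn.
under eq_bigr do rewrite big_split /=.
rewrite big_split /=.
have E1 : (\sum_(i < n) \sum_(j < n) (((i < j)%N && (k == i)) : nat))%N = (\sum_(j < n) ((k < j)%N : nat))%N.
  rewrite (bigD1 k) //= [X in (_ + X)%N]big1 ?addn0 => [|i ne].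
    by apply: eq_bigr => j _; rewrite eqxx andbT.
  by apply: big1 => j _; rewrite eq_sym (negbTE ne) andbF.
have E2 : (\sum_(i < n) \sum_(j < n) (((i < j)%N && (k == j)) : nat))%N = (\sum_(j < n) ((j < k)%N : nat))%N.
  rewrite exchange_big /= (bigD1 k) //= [X in (_ + X)%N]big1 ?addn0 => [|i ne].
    by apply: eq_bigr => j _; rewrite eqxx andbT.
  by apply: big1 => j _; rewrite eq_sym (negbTE ne) andbF.
rewrite E1 E2 -big_split /=.
transitivity (\sum_(j < n | j != k) 1)%N; last by rewrite sum1_card cardC1 card_ord.
rewrite (bigD1 k) //= ltnn /=; apply: eq_bigr => j ne.
by case: ltngtP ne => // /val_inj ->; rewrite eqxx.
Qed.

Definition Hh n (x y : 'I_n -> R) q (s : 'S_n) (p : 'I_n * 'I_n) (b : bool) :=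
  pc q p b * \prod_k (x (s k) ^+ exb b k p * y (s k) ^+ eyb b k p).

Lemma prod_two n (x y : 'I_n -> R) (s : 'S_n) (p : 'I_n * 'I_n) b :
  (p.1 < p.2)%N ->
  \prod_k (x (s k) ^+ exb b k p * y (s k) ^+ eyb b k p) =
  if b then y (s p.1) * x (s p.2) else x (s p.1) * y (s p.2).
Proof.
case: p => i j /= hij.
have nij : (i == j) = false by apply/negbTE; rewrite neq_ltn hij.
rewrite (bigD1 i) //= (bigD1 j) /=; last by rewrite eq_sym nij.
rewrite big1 ?mulr1 => [|k /andP[nki nkj]]; last first.
  by rewrite /exb /eyb /= (negbTE nki) (negbTE nkj) andbF /= !expr0 mulr1.
rewrite /exb /eyb /= hij !eqxx nij eq_sym nij /=.
by case: b => /=; rewrite ?expr0 ?expr1 ?mulr1 ?mul1r.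
Qed.

Lemma sumH n (x y : 'I_n -> R) q (s : 'S_n) p :
  \sum_(b : bool) Hh x y q s p b =
    if (p.1 < p.2)%N then Fh x y q (s p.1) (s p.2) else 1.
Proof.
rewrite big_bool /Hh /=.
case: ifP => hp.
  rewrite !prod_two // /pc hp /Fh; ring.
rewrite /pc hp !big1 ?mulr1 ?addr0 // => k _;
  by rewrite /exb /eyb hp /= !expr0 mulr1.
Qed.

Lemma expandA n (x y : 'I_n -> R) q (s : 'S_n) :
  \prod_(i < n) \prod_(j < n | (i < j)%N) Fh x y q (s i) (s j) =
  \sum_(f : {ffun 'I_n * 'I_n -> bool}) \prod_p Hh x y q s p (f p).
Proof.
rewrite -bigA_distr_bigA /=.
under eq_bigr do rewrite big_mkcond /=.
rewrite pair_bigA /=.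
by apply: eq_bigr => p _; rewrite sumH.
Qed.


Lemma exy_sum n (f : {ffun 'I_n * 'I_n -> bool}) k :
  (wc f k + \sum_p eyb (f p) k p)%N = n.-1.
Proof.
rewrite /wc -big_split /= -(count_pairs k); apply: eq_bigr => p _.
rewrite /exb /eyb; case hp: (p.1 < p.2)%N => //=.
case: (f p); case: (k =P p.1) => [e1|] /=; case: (k =P p.2) => [e2|] //= ;
  by move: e1 e2 => -> e2; move: hp; rewrite e2 ltnn.
Qed.

Lemma wc_le n (f : {ffun 'I_n * 'I_n -> bool}) k : (wc f k <= n.-1)%N.
Proof. by rewrite -(exy_sum f k) leq_addr. Qed.

Lemma expandB n (x y : 'I_n -> R) q (s : 'S_n) (f : {ffun 'I_n * 'I_n -> bool}) :
  \prod_p Hh x y q s p (f p) =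
  (\prod_p pc q p (f p)) * \prod_k (x (s k) ^+ wc f k * y (s k) ^+ (n.-1 - wc f k)).
Proof.
rewrite /Hh big_split /=; congr (_ * _).
rewrite exchange_big /=; apply: eq_bigr => k _.
rewrite big_split /= !prodrXr; congr (_ * _ ^+ _).
by rewrite -(exy_sum f k) addKn.
Qed.


Lemma Pm_mul n (x y : 'I_n -> R) (f : {ffun 'I_n * 'I_n -> bool}) :
  \matrix_(k, v) (x v ^+ wc f k * y v ^+ (n.-1 - wc f k)) = Pm f *m M0 x y.
Proof.
apply/matrixP => k v; rewrite !mxE.
have hn : (0 < n)%N by apply: leq_ltn_trans (leq0n k) (ltn_ord k).
have hw : (wc f k < n)%N by apply: leq_ltn_trans (wc_le f k) _; rewrite ltn_predL.
pose o := Ordinal hw.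
under eq_bigr do rewrite !mxE mulr_natl mulrb.
rewrite -big_mkcond /= (eq_bigl (pred1 o)) ?big_pred1_eq ?mxE //.
Qed.

Lemma Struct n (x y : 'I_n -> R) q :
  asym (Fh x y q) = Cq n q * \det (M0 x y).
Proof.
rewrite /asym.
under eq_bigr do rewrite expandA big_distrr /=.
rewrite exchange_big /= /Cq big_distrl /=; apply: eq_bigr => f _.
under eq_bigr do rewrite expandB mulrCA.
rewrite -big_distrr /= -mulrA -det_mulmx -Pm_mul; congr (_ * _).
by rewrite /determinant; apply: eq_bigr => s _; congr (_ * _); apply: eq_bigr => k _; rewrite mxE.
Qed.


Lemma reindex_lift n (G : 'S_n.+1 -> R) (i0 j0 : 'I_n.+1) :
  \sum_(s : 'S_n.+1 | s i0 == j0) G s = \sum_(s : 'S_n) G (lift_perm i0 j0 s).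
Proof.
rewrite (reindex (lift_perm i0 j0)); last first.
  pose ulsf i (s : 'S_n.+1) k := odflt k (unlift (s i) (s (lift i k))).
  have ulsfK i (s : 'S_n.+1) k: lift (s i) (ulsf i s k) = s (lift i k).
    rewrite /ulsf; have:= neq_lift i k.
    by rewrite -(can_eq (permK s)) => /unlift_some[] ? ? ->.
  have inj_ulsf: injective (ulsf i0 _).
    move=> s; apply: can_inj (ulsf (s i0) s^-1%g) _ => k'.
    by rewrite {1}/ulsf ulsfK !permK liftK.
  exists (fun s => perm (inj_ulsf s)) => [s _ | s].
    by apply/permP=> k'; rewrite permE /ulsf lift_perm_lift lift_perm_id liftK.
  move/(s _ =P _) => si0; apply/permP=> k.
  case: (unliftP i0 k) => [k'|] ->; rewrite ?lift_perm_id //.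
  by rewrite lift_perm_lift -si0 permE ulsfK.
by apply: eq_bigl => s; rewrite lift_perm_id eqxx.
Qed.

Lemma lift_ltn n (p : 'I_n.+1) (a b : 'I_n) : (lift p a < lift p b)%N = (a < b)%N.
Proof.
rewrite /= /bump; case: (leqP p a) => ha; case: (leqP p b) => hb /=; apply/idP/idP; lia.
Qed.

Lemma lt_lift n (p : 'I_n.+1) (b : 'I_n) : (p < lift p b)%N = (p <= b)%N.
Proof. rewrite /= /bump; case: (leqP p b) => hb /=; apply/idP/idP; lia. Qed.

Lemma prod_geq (c : R) m p :
  \prod_(b < m) (if (p <= b)%N then c else 1) = c ^+ (m - p).
Proof.
elim: m => [|m IH]; first by rewrite big_ord0 sub0n expr0.
rewrite big_ord_recr /= IH; case: (leqP p m) => h.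
  by rewrite subSn // exprSr.
have -> : (m.+1 - p = 0)%N by lia.
have -> : (m - p = 0)%N by lia.
by rewrite mulr1.
Qed.


Lemma prod_lift n (F : 'I_n.+1 -> 'I_n.+1 -> R) q
  (h1 : forall a, F (lift ord_max a) ord_max = 1)
  (h2 : forall b, F ord_max (lift ord_max b) = - q) (p : 'I_n.+1) (s : 'S_n) :
  \prod_(i < n.+1) \prod_(j < n.+1 | (i < j)%N)
     F (lift_perm p ord_max s i) (lift_perm p ord_max s j) =
  (- q) ^+ (n - p) * \prod_(a < n) \prod_(b < n | (a < b)%N)
     F (lift ord_max (s a)) (lift ord_max (s b)).
Proof.
rewrite (bigD1_ord p) //=; congr (_ * _).
  rewrite big_mkcond (bigD1_ord p) //= ltnn mul1r lift_perm_id.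
  rewrite -(prod_geq _ n p); apply: eq_bigr => b _.
  by rewrite lt_lift lift_perm_lift h2.
apply: eq_bigr => a _.
rewrite big_mkcond (bigD1_ord p) //= lift_perm_id lift_perm_lift h1 if_same mul1r.
rewrite [RHS]big_mkcond; apply: eq_bigr => b _.
by rewrite lift_ltn lift_perm_lift.
Qed.


Lemma coef_sum n (q : R) :
  \sum_(p < n.+1) (-1) ^+ odd p * (-1) ^+ odd n * (- q) ^+ (n - p) = qint q n.+1.
Proof.
rewrite /qint (reindex_inj rev_ord_inj) /=; apply: eq_bigr => p _.
have hp : (p <= n)%N by rewrite -ltnS.
rewrite subSS (subKn hp) (exprNn q) !signr_odd.
have E : ((-1) ^+ (n - p) * (-1) ^+ n * (-1) ^+ p = 1 :> R).
  rewrite -!exprD; have -> : (n - p + n + p = n.*2)%N by lia.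
  by rewrite -signr_odd odd_double.
by rewrite mulrA E mul1r.
Qed.

Lemma B1 n (F : 'I_n.+1 -> 'I_n.+1 -> R) q
  (h1 : forall a, F (lift ord_max a) ord_max = 1)
  (h2 : forall b, F ord_max (lift ord_max b) = - q) :
  asym F = qint q n.+1 * asym (fun a b => F (lift ord_max a) (lift ord_max b)).
Proof.
rewrite /asym (partition_big (fun s : 'S_n.+1 => (s^-1)%g ord_max) predT) //=.
transitivity (\sum_(p < n.+1) \sum_(s : 'S_n)
   ((-1) ^+ odd p * (-1) ^+ odd n * (- q) ^+ (n - p)) *
   ((-1) ^+ s * \prod_(a < n) \prod_(b < n | (a < b)%N)
     F (lift ord_max (s a)) (lift ord_max (s b)))).
  apply: eq_bigr => p _.
  rewrite (eq_bigl (fun s : 'S_n.+1 => s p == ord_max)); last first.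
    by move=> s /=; apply/eqP/eqP => [<-|<-]; rewrite ?permKV ?permK.
  rewrite reindex_lift; apply: eq_bigr => s _.
  rewrite (prod_lift (q := q)) // odd_lift_perm !signr_addb.
  set P := \prod_(a < n) _; clearbody P.
  have -> : odd (@ord_max n) = odd n by [].
  move: ((-1) ^+ odd p : R) ((-1) ^+ odd n : R) ((-1) ^+ odd #|'I_n| : R) ((-1) ^+ odd #|porbits s| : R) ((- q) ^+ (n - p)) => a b c d e; ring.
under eq_bigr do rewrite -big_distrr /=.
by rewrite -big_distrl /= coef_sum.
Qed.


Lemma B2 n (x y : 'I_n.+1 -> R) (hx : x ord_max = 1) (hy : y ord_max = 0)
  (hy1 : forall a, y (lift ord_max a) = 1) :
  \det (M0 x y) = \det (M0 (fun a => x (lift ord_max a)) (fun a => y (lift ord_max a))).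
Proof.
rewrite (expand_det_col _ ord_max) (bigD1 ord_max) //= big1 ?addr0; last first.
  move=> i ne; rewrite !mxE hy expr0n /=.
  have : (i < n)%N by rewrite ltn_neqAle -ltnS ltn_ord andbT; apply: contra ne => /eqP e; apply/eqP/val_inj.
  by move=> h; rewrite (_ : (n - i == 0)%N = false) ?mulr0 ?mul0r //; apply/negbTE; rewrite subn_eq0 -ltnNge.
rewrite !mxE hx hy subnn expr0 expr1n mulr1 mul1r /cofactor.
rewrite addnn -signr_odd odd_double expr0 mul1r; congr (\det _).
by apply/matrixP => a b; rewrite !mxE !hy1 !expr1n !mulr1 lift_max.
Qed.

End S.

Lemma Cq_polyC (R : comNzRingType) n (q : R) : (Cq n q)%:P = Cq n (q%:P).
Proof.
rewrite /Cq rmorph_sum; apply: eq_bigr => f _; rewrite rmorphM rmorph_prod; congr (_ * _).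
  apply: eq_bigr => p _; rewrite /pc; case: ifP => _; case: (f p) => /=;
  by rewrite ?rmorph1 ?rmorphN ?rmorph0 ?rmorph_nat.
rewrite -det_map_mx; congr (\det _); apply/matrixP => i j; rewrite !mxE.
by rewrite rmorph_nat.
Qed.

Lemma qfact_polyC (R : comNzRingType) n (q : R) : (qfact q n)%:P = qfact (q%:P) n.
Proof.
rewrite /qfact rmorph_prod; apply: eq_bigr => i _.
rewrite /qint rmorph_sum; apply: eq_bigr => j _; by rewrite rmorphXn.
Qed.

Lemma Dreg (R : comNzRingType) n :
  GRing.lreg (\det (M0 (fun a : 'I_n => ('X^a : {poly R})) (fun _ => 1))).
Proof.
have -> : M0 (fun a : 'I_n => ('X^a : {poly R})) (fun _ => 1) = Vandermonde n (\row_a 'X^a).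
  by apply/matrixP => i j; rewrite !mxE expr1n mulr1 exprAC.
rewrite det_Vandermonde; apply: monic_lreg.
apply: monic_prod => i _; apply: monic_prod => j hij.
rewrite !mxE.
have -> : ('X^j - 'X^i : {poly R}) = 'X^i * ('X^(j - i) - 1%:P).
  by rewrite mulrBr polyC1 mulr1 -exprD subnKC // ltnW.
by rewrite monicMl ?monicXn // monicXnsubC // subn_gt0.
Qed.

Lemma Cq0 (R : comNzRingType) (q : R) : Cq 0 q = 1.
Proof.
have := Struct (fun _ : 'I_0 => 1) (fun _ => 1) q.
rewrite det_mx00 mulr1 => <-.
transitivity (\det (0 : 'M[R]_0)); last exact: det_mx00.
by rewrite /asym /determinant; apply: eq_bigr => s _; rewrite !big_ord0.
Qed.

Lemma Cq_qfact n : forall (R : comNzRingType) (q : R), Cq n q = qfact q n.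
Proof.
elim: n => [|n IH] R q; first by rewrite Cq0 /qfact big_ord0.
pose xs : 'I_n.+1 -> {poly R} := fun v => if unlift ord_max v is Some a then 'X^a else 1.
pose ys : 'I_n.+1 -> {poly R} := fun v => if unlift ord_max v is Some a then 1 else 0.
have hx : xs ord_max = 1 by rewrite /xs unlift_none.
have hy : ys ord_max = 0 by rewrite /ys unlift_none.
have hy1 : forall a, ys (lift ord_max a) = 1 by move=> a; rewrite /ys liftK.
have hx1 : forall a, xs (lift ord_max a) = 'X^a by move=> a; rewrite /xs liftK.
have S1 := Struct xs ys q%:P.
rewrite (B1 (q := q%:P)) in S1; last first.
- by move=> b; rewrite /Fh hx hy hy1 mulr0 sub0r mulr1 mulr1.
- by move=> a; rewrite /Fh hx hy hy1 !mulr0 subr0 mulr1.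
have E : asym (fun a b : 'I_n => Fh xs ys q%:P (lift ord_max a) (lift ord_max b)) =
  asym (Fh (fun a => xs (lift ord_max a)) (fun a => ys (lift ord_max a)) q%:P) by [].
rewrite E Struct IH B2 // in S1.
have ED : \det (M0 (fun a => xs (lift ord_max a)) (fun a => ys (lift ord_max a))) =
   \det (M0 (fun a : 'I_n => ('X^a : {poly R})) (fun _ => 1)).
  by congr (\det _); apply/matrixP => i j; rewrite !mxE hx1 hy1.
rewrite ED in S1.
have H : Cq n.+1 q%:P = qint q%:P n.+1 * qfact q%:P n.
  apply: (@Dreg R n); rewrite [LHS]mulrC -S1.
  move: (\det _) (qint _ _) (qfact _ _) => a b c; ring.
apply: (@polyC_inj R); rewrite Cq_polyC qfact_polyC H.
by rewrite /qfact big_ord_recr /= mulrC.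
Qed.

Lemma VdM (R : comNzRingType) n (z : 'I_n -> R) :
  \det (M0 z (fun v => 1 - z v)) = \prod_(i < n) \prod_(j < n | (i < j)%N) (z j - z i).
Proof.
pose X1 : {poly R} := 1 - 'X.
pose pk (k : 'I_n) : {poly R} := X1 ^+ (n.-1 - k) * 'X^k.
pose T : 'M[R]_n := \matrix_(k, e) (pk k)`_e.
have sz : forall k, (size (pk k) <= n)%N.
  move=> k; apply: leq_trans (size_polyMleq _ _) _; rewrite size_polyXn.
  have h1 : (size X1 <= 2)%N.
    apply: leq_trans (size_polyD _ _) _; by rewrite size_polyN size_polyX size_poly1.
  have h2 := size_poly_exp_leq X1 (n.-1 - k).
  have hk := ltn_ord k.
  have h3 : (((size X1).-1 * (n.-1 - k)) <= n.-1 - k)%N.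
    by rewrite -[X in (_ <= X)%N]mul1n leq_mul2r; apply/orP; right; rewrite -ltnS; case: (size _) h1 => //= m; rewrite ltnS.
  lia.
have -> : M0 z (fun v => 1 - z v) = T *m Vandermonde n (\row_v z v).
  apply/matrixP => k v; rewrite !mxE.
  under eq_bigr do rewrite !mxE.
  rewrite -(horner_coef_wide (z v) (sz k)) /pk hornerE /= hornerE hornerXn.
  by rewrite hornerD hornerN hornerX hornerC mulrC.
rewrite det_mulmx det_Vandermonde -det_tr det_trig.
  rewrite big1 ?mul1r => [|k _]; first by apply: eq_bigr => i _; apply: eq_bigr => j _; rewrite !mxE.
  rewrite !mxE /pk coefMXn ltnn subnn -horner_coef0 /X1.
  by rewrite horner_exp hornerD hornerN hornerX hornerC subr0 expr1n.
by apply/is_trig_mxP => i j hij; rewrite !mxE /pk coefMXn hij.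
Qed.

Unset Implicit Arguments. Set Strict Implicit.

Theorem lemma4 (R : comNzRingType) (n : nat) (hn : (1 <= n)%N) (q : R)
    (z : 'I_n -> R) :
  \sum_(s : 'S_n) (-1) ^+ s *
     \prod_(i < n) \prod_(j < n | (i < j)%N)
        (z (s j) - q * z (s i) - (1 - q) * z (s i) * z (s j))
  = qfact q n * \prod_(i < n) \prod_(j < n | (i < j)%N) (z j - z i).
Proof.
have := Struct z (fun v => 1 - z v) q.
rewrite Cq_qfact VdM => <-.
rewrite /asym; apply: eq_bigr => s _; congr (_ * _).
apply: eq_bigr => i _; apply: eq_bigr => j _; rewrite /Fh; ring.
Qed.
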